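(* For $m,n\ge1$, \[ G^{(1)}_{m,n}=\frac{(-1)^n}{n!}\int_0^1\binom{t}{m}\left[{n\atop 1}\right]_{t-1}dt . \]
   Context: Define $G^{(1)}_{m,n}$ ($m,n\ge0$) by the formal power series $\sum_{m,n\ge0}G^{(1)}_{m,n}x^my^n=\dfrac{y\log(1+x)-x\log(1+y)}{\log(1+x)-\log(1+y)}$. $\binom{t}{m}=t(t-1)\cdots(t-m+1)/m!$. The Stirling polynomials of the first kind $\left[{n\atop m}\right]_x\in\mathbb Z[x]$ ($n\ge m\ge0$) are defined by $\sum_{m=0}^n\left[{n\atop m}\right]_x y^m=(x+y)(x+y+1)\cdots(x+y+n-1)$. *)

(* Defs.v *)
From HB Require Import structures.
From mathcomp Require Import all_boot all_order all_algebra.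
From mathcomp Require Import all_classical all_reals all_analysis.
Set Implicit Arguments. Unset Strict Implicit. Unset Printing Implicit Defensive.
Import Order.TTheory GRing.Theory Num.Theory.
Local Open Scope ring_scope.

(* Coefficients of log(1+x) = sum_{k>=1} (-1)^(k+1) x^k / k. *)
Definition logc (R : fieldType) (k : nat) : R :=
  if k == 0%N then 0 else (-1) ^+ k.+1 / k%:R.

(* Coefficient of x^i y^j in D := log(1+x) - log(1+y). *)
Definition Dcoef (R : fieldType) (i j : nat) : R :=
  (if j == 0%N then logc R i else 0) - (if i == 0%N then logc R j else 0).

(* Coefficient of x^i y^j in N := y log(1+x) - x log(1+y). *)
Definition Ncoef (R : fieldType) (i j : nat) : R :=
  (if j == 1%N then logc R i else 0) - (if i == 1%N then logc R j else 0).

(* G (a bivariate formal power series given by its coefficients G i j)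
   is the quotient N / D, i.e. G * D = N in R[[x,y]]
   (R[[x,y]] is an integral domain, so G is unique if it exists). *)
Definition is_G1 (R : fieldType) (G : nat -> nat -> R) : Prop :=
  forall m n : nat,
    \sum_(i < m.+1) \sum_(j < n.+1) G i j * Dcoef R (m - i) (n - j) = Ncoef R m n.

Definition binomR (R : fieldType) (t : R) (m : nat) : R :=
  (\prod_(i < m) (t - i%:R)) / (m`!)%:R.

(* (x+y)(x+y+1)...(x+y+n-1) as a polynomial in y with coefficients in R[x]:
   outer variable = y, inner variable = x. *)
Definition stirling_gen (R : comRingType) (n : nat) : {poly {poly R}} :=
  \prod_(i < n) ('X + ('X + i%:R%:P)%:P).

Definition stirling1_poly (R : comRingType) (n m : nat) : {poly R} :=
  (stirling_gen R n)`_m.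

(* Main.v *)
Require Import Defs.
From HB Require Import structures.
From mathcomp Require Import all_boot all_order all_algebra.
From mathcomp Require Import all_classical all_reals all_analysis.
Import Order.TTheory GRing.Theory Num.Theory.
Import numFieldNormedType.Exports.
Set Implicit Arguments. Unset Strict Implicit. Unset Printing Implicit Defensive.
Local Open Scope ring_scope.

Definition Jf (R : realType) (p : {poly R}) : R :=
  \sum_(i < size p) p`_i / i.+1%:R.

Lemma JE (R : realType) (N : nat) (p : {poly R}) : (size p <= N)%N ->
  Jf p = \sum_(i < N) p`_i / i.+1%:R.
Proof.
move=> hN; rewrite /Jf (big_ord_widen N (fun i => p`_i / i.+1%:R)) //.
rewrite big_mkcond /=; apply: eq_bigr => i _.
case: ifP => // /negbT; rewrite -leqNgt => hi.
by rewrite nth_default // mul0r.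
Qed.

Lemma JD (R : realType) (p q : {poly R}) : Jf (p + q) = Jf p + Jf q.
Proof.
rewrite (@JE _ (size p + size q)); last first.
  by apply: leq_trans (size_polyD _ _) _; rewrite geq_max leq_addr leq_addl.
rewrite (@JE _ (size p + size q) p) ?leq_addr //.
rewrite (@JE _ (size p + size q) q) ?leq_addl //.
by rewrite -big_split /=; apply: eq_bigr => i _; rewrite coefD mulrDl.
Qed.

Lemma JZ (R : realType) (a : R) (p : {poly R}) : Jf (a *: p) = a * Jf p.
Proof.
rewrite (@JE _ (size p)) ?size_scale_leq // /Jf mulr_sumr.
by apply: eq_bigr => i _; rewrite coefZ mulrA.
Qed.

Lemma J0 (R : realType) : Jf (0 : {poly R}) = 0.
Proof. by rewrite /Jf size_poly0 big_ord0. Qed.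

Lemma Jsum (R : realType) (I : Type) (r : seq I) (P : pred I) (F : I -> {poly R}) :
  Jf (\sum_(i <- r | P i) F i) = \sum_(i <- r | P i) Jf (F i).
Proof. exact: (big_morph _ (@JD R) (@J0 R)). Qed.

Lemma Jderiv (R : realType) (Q : {poly R}) : Jf (Q^`()) = Q.[1] - Q.[0].
Proof.
have [->|Q0] := eqVneq Q 0; first by rewrite deriv0 J0 !horner0 subr0.
rewrite (@JE _ (size Q)); last exact: ltnW (lt_size_deriv Q0).
rewrite horner_coef horner_coef0.
case hs: (size Q) => [|s]; first by move/eqP: hs; rewrite size_poly_eq0 (negPf Q0).
rewrite big_ord_recr big_ord_recl /= expr0 mulr1 [RHS]addrC addKr.
rewrite coef_deriv [Q`_s.+1]nth_default ?hs // mul0rn mul0r addr0.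
apply: eq_bigr => i _; rewrite coef_deriv -[_ *+ _]mulr_natr mulfK ?pnatr_eq0 //.
by rewrite expr1n mulr1.
Qed.

Definition prim (R : realType) (p : {poly R}) : {poly R} :=
  \poly_(i < (size p).+1) (if i is k.+1 then p`_k / k.+1%:R else 0).

Lemma primK (R : realType) (p : {poly R}) : (prim p)^`() = p.
Proof.
apply/polyP => i; rewrite coef_deriv coef_poly ltnS.
case: ltnP => hi.
  by rewrite -[_ *+ _]mulr_natr divfK // pnatr_eq0.
by rewrite nth_default // mul0rn.
Qed.

Lemma int_deriv_poly (R : realType) (P : {poly R}) :
  (\int[@lebesgue_measure R]_(t in `[0%R, 1%R]) ((P^`()).[t])%:E =
   (P.[1] - P.[0])%:E)%E.
Proof.
rewrite EFinB (@continuous_FTC2 _ (horner P^`()) (horner P)) //.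
- by apply/continuous_subspaceT => x; exact: continuous_horner.
- split=> [x _| |].
  + exact: derivable_horner.
  + by apply: cvg_at_right_filter; exact: continuous_horner.
  + by apply: cvg_at_left_filter; exact: continuous_horner.
- by move=> x _; rewrite -derivE.
Qed.

Lemma int_poly (R : realType) (p : {poly R}) :
  (\int[@lebesgue_measure R]_(t in `[0%R, 1%R]) (p.[t])%:E = (Jf p)%:E)%E.
Proof. by rewrite -{1}(primK p) int_deriv_poly -Jderiv primK. Qed.
From mathcomp Require Import ring zify.

Definition Ap (R : realType) (m : nat) : {poly R} :=
  (m`!%:R)^-1 *: \prod_(i < m) ('X - i%:R%:P).

Lemma Ap_horner (R : realType) (t : R) m : (Ap R m).[t] = binomR t m.
Proof.
rewrite /Ap hornerZ horner_prod /binomR mulrC; congr (_ * _).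
by apply: eq_bigr => i _; rewrite hornerXsubC.
Qed.

Lemma Ap0 (R : realType) : Ap R 0 = 1.
Proof. by rewrite /Ap big_ord0 fact0 invr1 scale1r. Qed.

Lemma Ap_at0 (R : realType) m : (Ap R m).[0] = (m == 0)%:R.
Proof.
case: m => [|m]; first by rewrite Ap0 hornerC.
by rewrite /Ap hornerZ horner_prod big_ord_recl /= hornerXsubC subrr mul0r mulr0.
Qed.

Lemma Ap_at1 (R : realType) m : (Ap R m).[1] = (m <= 1)%N%:R.
Proof.
case: m => [|[|m]]; first by rewrite Ap0 hornerC.
  by rewrite /Ap hornerZ horner_prod big_ord1 hornerXsubC subr0 invr1 mulr1.
rewrite /Ap hornerZ horner_prod big_ord_recl big_ord_recl /= !hornerXsubC.
by rewrite subrr mul0r mulr0 mulr0.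
Qed.

Lemma prod_natS (R : realType) m : \prod_(i < m) (i.+1%:R : R) = m`!%:R.
Proof.
elim: m => [|m IH]; first by rewrite big_ord0 fact0.
by rewrite big_ord_recr /= IH factS natrM mulrC.
Qed.

Lemma Ap_shift (R : realType) m :
  Ap R m.+1 \Po ('X + 1) = Ap R m.+1 + Ap R m.
Proof.
rewrite /Ap linearZ /= rmorph_prod /= big_ord_recl /= big_ord_recr /=.
set P := \prod_(i < m) ('X - i%:R%:P).
have -> : \prod_(i < m) (('X - (bump 0 i)%:R%:P) \Po ('X + 1)) = P.
  apply: eq_bigr => i _; rewrite comp_polyB comp_polyX comp_polyC /bump /=.
  rewrite -natr1 rmorphD rmorph1 /=; ring.
rewrite comp_polyB comp_polyX comp_polyC subr0.
have -> : (P * ('X - m%:R%:P)) = ('X + 1) * P - (m.+1%:R%:P) * P.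
  rewrite -natr1 rmorphD rmorph1 /=; ring.
rewrite scalerBr -addrA [X in _ = _ + X](_ : _ = 0) ?addr0 //.
rewrite mul_polyC scalerA factS natrM invfM mulrAC mulVf ?pnatr_eq0 //.
by rewrite mul1r addNr.
Qed.

Lemma periodic_const (R : realType) (p : {poly R}) :
  p \Po ('X + 1) = p -> p = (p.[0])%:P.
Proof.
move=> hp; apply/eqP; rewrite -subr_eq0; apply/eqP.
set q := p - _.
have hq : forall k : nat, q.[k%:R] = 0.
  elim=> [|k IH]; first by rewrite /q hornerD hornerN hornerC subrr.
  have qp : q \Po ('X + 1) = q by rewrite /q linearB /= hp comp_polyC.
  have e : q.[k%:R + 1] = (q \Po ('X + 1)).[k%:R].
    by rewrite horner_comp (_ : ('X + 1).[k%:R] = k%:R + 1) // hornerD hornerX hornerC.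
  by rewrite -natr1 e qp IH.
apply: (@roots_geq_poly_eq0 _ _ [seq k%:R | k <- iota 0 (size q)]).
- by apply/allP => x /mapP [k _ ->]; rewrite /root hq.
- by rewrite map_inj_uniq ?iota_uniq // => a b /eqP; rewrite eqr_nat => /eqP.
- by rewrite size_map size_iota.
Qed.

Definition Sp (R : realType) (m : nat) : {poly R} :=
  \sum_(i < m.+1) logc R (m - i) *: Ap R i.

Lemma logc0 (R : realType) : logc R 0 = 0.
Proof. by rewrite /logc. Qed.

Lemma Sp_split (R : realType) m :
  Sp R m.+1 = logc R m.+1 *: 1 + \sum_(i < m.+1) logc R (m - i) *: Ap R i.+1.
Proof. by rewrite /Sp big_ord_recl /= Ap0 subn0. Qed.

Lemma Sp_shift (R : realType) m :
  Sp R m.+1 \Po ('X + 1) = Sp R m.+1 + Sp R m.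
Proof.
rewrite Sp_split linearD /= linearZ /= comp_polyC linear_sum /=.
under eq_bigr do rewrite linearZ /= Ap_shift scalerDr.
by rewrite big_split /= addrA.
Qed.

Lemma deriv_shift (R : realType) (p : {poly R}) :
  (p \Po ('X + 1))^`() = p^`() \Po ('X + 1).
Proof. by rewrite deriv_comp derivD derivX derivC addr0 mulr1. Qed.

Lemma Ap_deriv_at0 (R : realType) m : ((Ap R m.+1)^`()).[0] = logc R m.+1.
Proof.
rewrite /Ap derivZ hornerZ big_ord_recl /= derivM derivXsubC mul1r hornerD.
rewrite hornerM hornerXsubC subrr mul0r addr0 horner_prod.
rewrite (eq_bigr (fun i : 'I_m => - (i.+1%:R : R))); last first.
  by move=> i _; rewrite hornerXsubC sub0r.
rewrite prodrN card_ord prod_natS /logc /= factS natrM invfM.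
rewrite !exprS !mulN1r opprK.
rewrite [(-1)^+m * _]mulrC mulrA divfK ?pnatr_eq0 -?lt0n ?fact_gt0 //.
by rewrite mulrC.
Qed.

Lemma Ap_deriv (R : realType) m : (Ap R m)^`() = Sp R m.
Proof.
elim: m => [|m IH].
  by rewrite Ap0 /Sp big_ord1 /= logc0 scale0r derivC.
set E := (Ap R m.+1)^`() - Sp R m.+1.
have hE : E \Po ('X + 1) = E.
  rewrite /E linearB /= -deriv_shift Ap_shift derivD IH Sp_shift.
  by rewrite opprD addrACA subrr addr0.
have E0 : E.[0] = 0.
  rewrite /E hornerD hornerN Ap_deriv_at0 Sp_split hornerD hornerZ hornerC mulr1.
  rewrite horner_sum big1 ?addr0 ?subrr // => i _.
  by rewrite hornerZ Ap_at0 mulr0.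
apply/eqP; rewrite -subr_eq0; apply/eqP.
by rewrite -/E (periodic_const hE) E0.
Qed.

Definition Bp (R : realType) (n : nat) : {poly R} := Ap R n \Po (1 - 'X).

Lemma Bp_deriv (R : realType) n :
  (Bp R n)^`() = - \sum_(j < n.+1) logc R (n - j) *: Bp R j.
Proof.
rewrite /Bp deriv_comp derivB derivC derivX sub0r mulrN1 Ap_deriv /Sp.
by rewrite linear_sum /=; congr (- _); apply: eq_bigr => j _; rewrite linearZ.
Qed.

Lemma Bp_at1 (R : realType) j : (Bp R j).[1] = (j == 0)%:R.
Proof. by rewrite /Bp horner_comp hornerD hornerN hornerX hornerC subrr Ap_at0. Qed.

Lemma Bp_at0 (R : realType) j : (Bp R j).[0] = (j <= 1)%N%:R.
Proof. by rewrite /Bp horner_comp hornerD hornerN hornerX hornerC subr0 Ap_at1. Qed.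

Lemma Bd_at1 (R : realType) n : ((Bp R n)^`()).[1] = - logc R n.
Proof.
rewrite Bp_deriv hornerN horner_sum big_ord_recl /= hornerZ Bp_at1 mulr1 subn0.
by rewrite big1 ?addr0 // => i _; rewrite hornerZ Bp_at1 mulr0.
Qed.

Lemma Bd_at0 (R : realType) n :
  ((Bp R n)^`()).[0] = - (logc R n + logc R n.-1).
Proof.
rewrite Bp_deriv hornerN horner_sum; congr (- _).
case: n => [|n]; first by rewrite big_ord1 hornerZ Bp_at0 mulr1 logc0 addr0.
rewrite big_ord_recl big_ord_recl /= !hornerZ !Bp_at0 !mulr1 subn0 subn1 /=.
by rewrite big1 ?addr0 // => i _; rewrite hornerZ Bp_at0 mulr0.
Qed.

Definition rp (R : realType) (n : nat) : {poly R} := \prod_(i < n) ('X + i%:R%:P).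

Lemma stir_coefs (R : realType) n :
  (stirling_gen R n)`_0 = rp R n /\ (stirling_gen R n)`_1 = (rp R n)^`().
Proof.
elim: n => [|n [IH0 IH1]].
  by rewrite /stirling_gen /rp !big_ord0 !coefC /= derivC.
rewrite /stirling_gen /rp !big_ord_recr /= -/(stirling_gen R n) -/(rp R n).
rewrite !mulrDr !coefD !coefMX !coefMC /= IH0 IH1 add0r -mulrDr; split => //.
by rewrite derivM derivD derivX derivC addr0 mulr1 addrC.
Qed.

Lemma stirling1_eq (R : realType) n : stirling1_poly R n 1 = (rp R n)^`().
Proof. by rewrite /stirling1_poly; case: (stir_coefs R n). Qed.

Lemma Bp_rp (R : realType) n :
  Bp R n = ((-1) ^+ n / n`!%:R) *: (rp R n \Po ('X - 1)).
Proof.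
rewrite /Bp /Ap /rp linearZ /= !rmorph_prod /=.
rewrite mulrC -scalerA; congr (_ *: _).
rewrite -mul_polyC rmorph_sign.
have -> : (-1) ^+ n = (-1) ^+ #|'I_n| :> {poly R} by rewrite card_ord.
rewrite -prodrN; apply: eq_bigr => i _.
rewrite comp_polyB comp_polyD !comp_polyX !comp_polyC; ring.
Qed.

Lemma Bd_rp (R : realType) n :
  (Bp R n)^`() = ((-1) ^+ n / n`!%:R) *: ((rp R n)^`() \Po ('X - 1)).
Proof.
by rewrite Bp_rp derivZ deriv_comp derivB derivX derivC subr0 mulr1.
Qed.

Definition Hc (R : realType) m n : R := Jf (Ap R m * (Bp R n)^`()).

Lemma sum_lastj (R : realType) n (x : R) (F : nat -> {poly R}) :
  \sum_(j < n.+1) (if (n - j == 0)%N then x else 0) *: F j = x *: F n.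
Proof.
rewrite big_ord_recr /= subnn eqxx big1 ?add0r // => j _.
by rewrite subn_eq0 leqNgt ltn_ord scale0r.
Qed.

Lemma poly_id (R : realType) m n :
  \sum_(i < m.+1) \sum_(j < n.+1) Dcoef R (m - i) (n - j) *: (Ap R i * (Bp R j)^`())
  = (Ap R m * (Bp R n)^`())^`().
Proof.
have e1 : forall i : 'I_m.+1,
    \sum_(j < n.+1) Dcoef R (m - i) (n - j) *: (Ap R i * (Bp R j)^`()) =
    logc R (m - i) *: (Ap R i * (Bp R n)^`()) -
    \sum_(j < n.+1) (if (m - i == 0)%N then logc R (n - j) else 0) *: (Ap R i * (Bp R j)^`()).
  move=> i; rewrite /Dcoef; under eq_bigr do rewrite scalerBl.
  by rewrite sumrB (sum_lastj n _ (fun j => Ap R i * (Bp R j)^`())).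
rewrite (eq_bigr _ (fun i _ => e1 i)) sumrB exchange_big /=.
under [X in _ - X = _]eq_bigr do
  rewrite (sum_lastj m _ (fun i => Ap R i * (Bp R _)^`())).
rewrite (eq_bigr (fun i : 'I_m.+1 => (logc R (m - i) *: Ap R i) * (Bp R n)^`()));
  last by move=> i _; rewrite scalerAl.
rewrite [X in _ - X = _](eq_bigr (fun j : 'I_n.+1 => Ap R m * (logc R (n - j) *: (Bp R j)^`())));
  last by move=> j _; rewrite scalerAr.
rewrite -mulr_suml -mulr_sumr.
have -> : \sum_(i < m.+1) logc R (m - i) *: Ap R i = (Ap R m)^`() by rewrite Ap_deriv.
have -> : \sum_(j < n.+1) logc R (n - j) *: (Bp R j)^`() = - (Bp R n)^`()^`().
  rewrite Bp_deriv derivN opprK linear_sum /=.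
  by apply: eq_bigr => j _; rewrite derivZ.
by rewrite derivM mulrN opprK.
Qed.

Lemma HD (R : realType) m n :
  \sum_(i < m.+1) \sum_(j < n.+1) Hc R i j * Dcoef R (m - i) (n - j) =
  - (m <= 1)%N%:R * logc R n + (m == 0)%:R * (logc R n + logc R n.-1).
Proof.
have -> : \sum_(i < m.+1) \sum_(j < n.+1) Hc R i j * Dcoef R (m - i) (n - j) =
   Jf (\sum_(i < m.+1) \sum_(j < n.+1) Dcoef R (m - i) (n - j) *: (Ap R i * (Bp R j)^`())).
  rewrite Jsum; apply: eq_bigr => i _; rewrite Jsum; apply: eq_bigr => j _.
  by rewrite JZ mulrC.
rewrite poly_id Jderiv !hornerM Ap_at1 Ap_at0 Bd_at1 Bd_at0.
by rewrite mulrN mulNr mulrN opprK.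
Qed.

Definition G0 (R : realType) (m n : nat) : R :=
  Hc R m n + ((m == 0) && (n == 1))%N%:R.

Lemma yD (R : realType) m n :
  \sum_(i < m.+1) \sum_(j < n.+1)
     ((i == 0 :> nat) && (j == 1 :> nat))%:R * Dcoef R (m - i) (n - j) =
  if n is n'.+1 then Dcoef R m n' else 0.
Proof.
rewrite big_ord_recl [X in _ + X]big1 ?addr0; last first.
  by move=> i _; rewrite big1 // => j _; rewrite /= mul0r.
case: n => [|n]; first by rewrite big_ord1 /= mul0r.
rewrite big_ord_recl big_ord_recl big1 /=; last first.
  by move=> j _; rewrite mul0r.
by rewrite mul0r add0r mul1r addr0 !subn0 subSS subn0.
Qed.

Lemma G0_is_G1 (R : realType) : is_G1 (G0 R).
Proof.
move=> m n.
rewrite (eq_bigr (fun i : 'I_m.+1 => \sum_(j < n.+1) Hc R i j * Dcoef R (m - i) (n - j) +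
   \sum_(j < n.+1) ((i == 0 :> nat) && (j == 1 :> nat))%:R * Dcoef R (m - i) (n - j))); last first.
  by move=> i _; rewrite -big_split /=; apply: eq_bigr => j _; rewrite /G0 mulrDl.
rewrite big_split /= HD yD /Ncoef.
case: n => [|[|n]]; case: m => [|[|m]]; rewrite /Dcoef /= ?logc0; try ring.
Qed.

Lemma sum1_ind (R : realType) M b (F : nat -> R) :
  \sum_(j < M) (if j == b :> nat then F j else 0) = if (b < M)%N then F b else 0.
Proof. by rewrite -big_mkcond big_ord1_eq. Qed.

Lemma sum2_ind (R : realType) K M (c : bool) a b (F : nat -> nat -> R) :
  \sum_(i < K) \sum_(j < M) (if [&& c, i == a :> nat & j == b :> nat] then F i j else 0)
  = if [&& c, (a < K)%N & (b < M)%N] then F a b else 0.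
Proof.
case: c => /=; last by rewrite big1 // => i _; rewrite big1.
rewrite (eq_bigr (fun i : 'I_K => if i == a :> nat then
   \sum_(j < M) (if j == b :> nat then F a j else 0) else 0)); last first.
  move=> i _; case: eqP => [->|_] //; by rewrite big1.
rewrite (@sum1_ind R K a (fun _ => \sum_(j < M) (if j == b :> nat then F a j else 0))).
rewrite (@sum1_ind R M b (F a)); by case: (a < K)%N.
Qed.

Lemma Dcoef10 (R : realType) : logc R 1 = 1.
Proof. by rewrite /logc /= expr2 mulN1r opprK divr1. Qed.

Lemma uniqE (R : realType) (E : nat -> nat -> R) :
  (forall m n, \sum_(i < m.+1) \sum_(j < n.+1) E i j * Dcoef R (m - i)%N (n - j)%N = 0) ->
  forall i j, E i j = 0.
Proof.
move=> hE.
suff H : forall d k : nat, (k <= d)%N -> E k (d - k)%N = 0.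
  by move=> i j; have := H (i + j) i (leq_addr _ _); rewrite addKn.
elim/ltn_ind => d IHd.
have low : forall i j : nat, (i + j < d)%N -> E i j = 0.
  by move=> i j hij; have := IHd _ hij i (leq_addr _ _); rewrite addKn.
have key : forall k : nat, (k <= d)%N ->
    (if [&& (0 < k)%N, (k.-1 < k.+1)%N & (d.+1 - k < (d.+1 - k).+1)%N]
       then E k.-1 (d.+1 - k)%N else 0) -
    (if [&& (k <= d)%N, (k < k.+1)%N & (d - k < (d.+1 - k).+1)%N]
       then E k (d - k)%N else 0) = 0.
  move=> k kd; rewrite -[RHS](hE k (d.+1 - k)%N).
  rewrite -(@sum2_ind R k.+1 (d.+1 - k).+1 (0 < k)%N k.-1 (d.+1 - k)%N E).
  rewrite -(@sum2_ind R k.+1 (d.+1 - k).+1 (k <= d)%N k (d - k)%N E) -sumrB.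
  apply: eq_bigr => i _; rewrite -sumrB; apply: eq_bigr => j _.
  have hi := ltn_ord i; have hj := ltn_ord j.
  have [h|h] := ltnP (i + j) d.
    by rewrite low // !if_same mul0r; exact: (subrr (0 : R)).
  rewrite /Dcoef.
  case Hb: (d.+1 - k - j == 0)%N; case Ha: (k - i == 0)%N.
  - have -> : [&& (0 < k)%N, i == k.-1 :> nat & j == (d.+1 - k)%N :> nat] = false by lia.
    have -> : [&& (k <= d)%N, i == k :> nat & j == (d - k)%N :> nat] = false by lia.
    by rewrite (eqP Ha) (eqP Hb) /= !subrr mulr0.
  - have -> : [&& (0 < k)%N, i == k.-1 :> nat & j == (d.+1 - k)%N :> nat] = true by lia.
    have -> : [&& (k <= d)%N, i == k :> nat & j == (d - k)%N :> nat] = false by lia.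
    by rewrite (_ : (k - i)%N = 1%N) ?Dcoef10 ?subr0 ?mulr1 //; lia.
  - have -> : [&& (0 < k)%N, i == k.-1 :> nat & j == (d.+1 - k)%N :> nat] = false by lia.
    have -> : [&& (k <= d)%N, i == k :> nat & j == (d - k)%N :> nat] = true by lia.
    by rewrite (_ : (d.+1 - k - j)%N = 1%N) ?Dcoef10 ?sub0r ?mulrN1 //; lia.
  - lia.
elim=> [|k IHk] hk.
  have := key 0%N hk; rewrite /= !subn0 (_ : (d < d.+2)%N) //.
  by rewrite sub0r => /eqP; rewrite oppr_eq0 => /eqP.
have := key k.+1 hk; rewrite /= subSS IHk ?(ltnW hk) //.
rewrite hk ltnS leqnn (_ : (d - k.+1 < (d - k).+1)%N) /=; last by lia.
by rewrite if_same ltnS leqnn /= sub0r => /eqP; rewrite oppr_eq0 => /eqP.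
Qed.

Theorem proposition5p4 (R : realType) :
  (exists G : nat -> nat -> R, is_G1 G) /\
  forall (G : nat -> nat -> R), is_G1 G ->
  forall m n : nat, (1 <= m)%N -> (1 <= n)%N ->
    ((G m n)%:E =
     ((-1) ^+ n / (n`!)%:R)%:E *
       \int[@lebesgue_measure R]_(t in `[0%R, 1%R])
          (binomR t m * (stirling1_poly R n 1).[t - 1])%:E)%E.
Proof.
split; first by exists (G0 R); exact: G0_is_G1.
move=> G hG m n hm hn.
have hGG : forall i j, G i j - G0 R i j = 0.
  apply: uniqE => a b.
  transitivity (Ncoef R a b - Ncoef R a b); last by rewrite subrr.
  rewrite -{1}(hG a b) -(G0_is_G1 R a b) -sumrB; apply: eq_bigr => i _.
  by rewrite -sumrB; apply: eq_bigr => j _; rewrite mulrBl.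
have -> : G m n = Hc R m n.
  move/eqP: (hGG m n); rewrite subr_eq0 => /eqP ->.
  by rewrite /G0 (_ : (m == 0)%N = false) ?addr0 //; case: m hm.
set Q := Ap R m * ((rp R n)^`() \Po ('X - 1)).
have -> : (\int[@lebesgue_measure R]_(t in `[0%R, 1%R])
      (binomR t m * (stirling1_poly R n 1).[t - 1])%:E =
    \int[@lebesgue_measure R]_(t in `[0%R, 1%R]) (Q.[t])%:E)%E.
  apply: eq_integral => t _; congr EFin.
  by rewrite /Q hornerM Ap_horner horner_comp stirling1_eq !hornerE.
rewrite int_poly -EFinM; congr EFin.
by rewrite /Hc Bd_rp -scalerAr JZ.
Qed.
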